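(* Consider the following model. States $\omega_t\in\{0,1\}$, $t\in\{1,2\}$, with $\Pr[\omega_1=1]=\mu_0\in(0,1)$ and $\Pr[\omega_2=\omega\mid\omega_1=\omega]=\rho\in(1/2,1)$. In each period an agent A chooses $e_t\in\{0,1\}$; if $e_t=1$ he observes $\omega_t$, if $e_t=0$ he observes $\omega_t$ with probability $\pi\in(0,1)$ and nothing otherwise; he reports $r_t\in\{\varnothing,\omega_t\}$ if he observed $\omega_t$, else $r_t=\varnothing$. A's payoff is $x-c(e_1+e_2)$, $c>0$, with $x=\hat x(r_1,r_2)$. A mechanism consists of $\sigma_1\in\{0,1\}$, $\sigma_2:\{\varnothing,0,1\}\to\{0,1\}$, $\hat x:\{\varnothing,0,1\}^2\to\{0,1\}$; A best-responds, following the recommendation and disclosing when indifferent. A mechanism is IC if at every history occurring with positive probability A optimally obeys the testing recommendation and discloses every observed result, and $\hat x(r_1,\varnothing)=0$ whenever $\sigma_2(r_1)=1$. Let $\gamma=c/(1-\pi)$ and for $r_1\in\{\varnothing,0,1\}$ and $\mu\in[0,1]$ define $$v(r_1,\mu)=-c\sigma_2(r_1)+[\sigma_2(r_1)+(1-\sigma_2(r_1))\pi][\mu\hat x(r_1,1)+(1-\mu)\hat x(r_1,0)]+(1-\sigma_2(r_1))(1-\pi)\hat x(r_1,\varnothing).$$ Let $\mathbb{E}_{\mu_0}[v(\tilde r_1,\tilde\mu_2)]=\mu_0 v(1,\rho)+(1-\mu_0)v(0,1-\rho)$ and $\mathbb{E}_{\mu_0}[v(\varnothing,\tilde\mu_2)]=\mu_0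 v(\varnothing,\rho)+(1-\mu_0)v(\varnothing,1-\rho)$. Then in any IC mechanism with $\sigma_1=0$, $$\gamma\ \ge\ \mathbb{E}_{\mu_0}[v(\tilde r_1,\tilde\mu_2)]-\mathbb{E}_{\mu_0}[v(\varnothing,\tilde\mu_2)]\ \ge\ 0.$$ *)

(* Defs.v *)
From mathcomp Require Import all_boot all_order all_algebra.
Set Implicit Arguments. Unset Strict Implicit. Unset Printing Implicit Defensive.
Import Order.TTheory GRing.Theory Num.Theory.
Local Open Scope ring_scope.

(* States: bool (true = 1). Reports: option bool (None = "no report" ∅). *)
Definition rep := option bool.

Record mech := Mech {
  sig1 : bool;
  sig2 : rep -> bool;
  xh   : rep -> rep -> bool }.

Section Model.
Variables (R : realFieldType) (mu0 rho piA c : R) (M : mech).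

Definition b2R (b : bool) : R := (b : nat)%:R.

Definition xr (r1 r2 : rep) : R := b2R (xh M r1 r2).

(* best period-2 report after observing omega_2 = w (report w or ∅) *)
Definition bestrep (r1 : rep) (w : bool) : R :=
  Num.max (xr r1 (Some w)) (xr r1 None).

(* period-2 expected payoff of choosing effort e2, given period-1 report r1
   and belief mu = Pr[omega_2 = 1], followed by optimal disclosure *)
Definition U2 (r1 : rep) (mu : R) (e2 : bool) : R :=
  if e2 then - c + (mu * bestrep r1 true + (1 - mu) * bestrep r1 false)
  else piA * (mu * bestrep r1 true + (1 - mu) * bestrep r1 false)
       + (1 - piA) * xr r1 None.

Definition V2 (r1 : rep) (mu : R) : R := Num.max (U2 r1 mu true) (U2 r1 mu false).

(* belief about omega_2 when omega_1 was not observed *)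
Definition mubar : R := mu0 * rho + (1 - mu0) * (1 - rho).

(* period-1 expected payoff of effort e1, followed by optimal reporting and
   optimal continuation *)
Definition U1 (e1 : bool) : R :=
  let q := if e1 then 1 else piA in
  (if e1 then - c else 0)
  + q * (mu0 * Num.max (V2 (Some true) rho) (V2 None rho)
         + (1 - mu0) * Num.max (V2 (Some false) (1 - rho)) (V2 None (1 - rho)))
  + (1 - q) * V2 None mubar.

(* incentive compatibility at a period-2 history (r1, belief mu):
   obeying sigma2(r1) is optimal and disclosing each observed omega_2 is optimal *)
Definition IC2 (r1 : rep) (mu : R) : Prop :=
  U2 r1 mu (~~ sig2 M r1) <= U2 r1 mu (sig2 M r1)
  /\ (0 < mu -> xr r1 None <= xr r1 (Some true))
  /\ (mu < 1 -> xr r1 None <= xr r1 (Some false)).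

Definition IC : Prop :=
  U1 (~~ sig1 M) <= U1 (sig1 M)
  (* period 1 disclosure after observing omega_1 = 1 resp. 0 *)
  /\ V2 None rho <= V2 (Some true) rho
  /\ V2 None (1 - rho) <= V2 (Some false) (1 - rho)
  (* period 2 histories reached on path *)
  /\ IC2 (Some true) rho
  /\ IC2 (Some false) (1 - rho)
  /\ (sig1 M = false -> IC2 None mubar)
  /\ (forall r1, sig2 M r1 -> xh M r1 None = false).

Definition v (r1 : rep) (mu : R) : R :=
  let s := b2R (sig2 M r1) in
  - c * s + (s + (1 - s) * piA) * (mu * xr r1 (Some true) + (1 - mu) * xr r1 (Some false))
  + (1 - s) * (1 - piA) * xr r1 None.

Definition Ev_r1 : R := mu0 * v (Some true) rho + (1 - mu0) * v (Some false) (1 - rho).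
Definition Ev_empty : R := mu0 * v None rho + (1 - mu0) * v None (1 - rho).

End Model.

(* Main.v *)
Require Import Defs.
From mathcomp Require Import all_boot all_order all_algebra.
From mathcomp Require Import lra ring.
Import Order.TTheory GRing.Theory Num.Theory.
Local Open Scope ring_scope.

Lemma V2_eq (R : realFieldType) (piA c : R) (M : mech) r1 mu :
  0 < mu -> mu < 1 -> IC2 piA c M r1 mu -> V2 piA c M r1 mu = v piA c M r1 mu.
Proof.
move=> h0 h1 [hob [ht hf]].
have bt : bestrep R M r1 true = xr R M r1 (Some true) by rewrite /bestrep max_l // ht.
have bf : bestrep R M r1 false = xr R M r1 (Some false) by rewrite /bestrep max_l // hf.
rewrite /V2 /v; case: (sig2 M r1) hob => /= hob.
- rewrite max_l // /U2 bt bf /b2R /=; ring.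
- rewrite max_r // /U2 bt bf /b2R /=; ring.
Qed.

Theorem lemma7 (R : realFieldType) (mu0 rho piA c : R) (M : mech) :
  0 < mu0 < 1 -> 2^-1 < rho < 1 -> 0 < piA < 1 -> 0 < c ->
  IC mu0 rho piA c M -> sig1 M = false ->
  Ev_r1 mu0 rho piA c M - Ev_empty mu0 rho piA c M <= c / (1 - piA)
  /\ 0 <= Ev_r1 mu0 rho piA c M - Ev_empty mu0 rho piA c M.
Proof.
move=> /andP[m0 m1] /andP[r0 r1] /andP[p0 p1] c0 [h1 [d1 [d0 [i1 [i0 [ie _]]]]]] s1.
have ie' := ie s1.
have rp : 0 < rho by apply: lt_trans r0; rewrite invr_gt0; lra.
have rq0 : 0 < 1 - rho by lra.
have rq1 : 1 - rho < 1 by lra.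
have mb0 : 0 < mubar mu0 rho by rewrite /mubar; nra.
have mb1 : mubar mu0 rho < 1 by rewrite /mubar; nra.
have E1 : Ev_r1 mu0 rho piA c M = mu0 * V2 piA c M (Some true) rho
   + (1 - mu0) * V2 piA c M (Some false) (1 - rho).
  by rewrite /Ev_r1 !V2_eq.
have E0 : Ev_empty mu0 rho piA c M = V2 piA c M None (mubar mu0 rho).
  rewrite V2_eq // /Ev_empty /v /mubar; ring.
rewrite E1 E0; split.
- rewrite ler_pdivlMr; last lra.
  move: h1; rewrite s1 /U1 /= max_l // max_l // => h1.
  set X := mu0 * V2 piA c M (Some true) rho + (1 - mu0) * V2 piA c M (Some false) (1 - rho).
  set Y := V2 piA c M None (mubar mu0 rho).
  have -> : (X - Y) * (1 - piA) = c + ((- c + 1 * X + (1 - 1) * Y) - (0 + piA * X + (1 - piA) * Y)).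
    rewrite /X /Y; ring.
  move: h1; rewrite /X /Y; move=> h1. lra.
- have key : forall e, U2 piA c M None (mubar mu0 rho) e =
     mu0 * U2 piA c M None rho e + (1 - mu0) * U2 piA c M None (1 - rho) e.
    by case; rewrite /U2 /mubar; ring.
  have hV : forall mu e, U2 piA c M None mu e <= V2 piA c M None mu.
    by move=> mu e; rewrite /V2 le_max; case: e; rewrite lexx ?orbT.
  have : V2 piA c M None (mubar mu0 rho) <=
     mu0 * V2 piA c M None rho + (1 - mu0) * V2 piA c M None (1 - rho).
    rewrite {1}/V2; case: (leP (U2 piA c M None (mubar mu0 rho) true) (U2 piA c M None (mubar mu0 rho) false)) => _;
    rewrite key; apply: lerD; apply: ler_wpM2l; try lra; apply: hV.
  nra.
Qed.
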